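(* Consider a smoothed online classification problem on a measure space $(\mathcal{X},\nu)$ with $\nu$ a finite measure and concept $c$. Suppose the learner's prediction strategy $\mathcal{A}$ is online locally consistent (OLC) with respect to $c$ and the adversary is $\nu$-dominated. Then $$\lim_{T\to\infty}\frac1T\sum_{t=1}^T\ell(x_t,y_t,\hat y_t)=0\quad\text{almost surely}.$$
   Context: The loss $\ell(x,y,\hat y)$ is non-negative, bounded, with $\ell(x,y,y)=0$. Protocol: adversary fixes $c:\mathcal{X}\to\mathcal{Y}$ knowing $\mathcal{A}$; at each $t$ selects a distribution $\mu_t$ (possibly history-dependent), draws $x_t\sim\mu_t$; learner predicts $\hat y_t=h_t(x_t)$; $y_t=c(x_t)$. A prediction strategy $\mathcal{A}$ maps past data $\{(x_\tau,y_\tau)\}_{\tau\le t}$ to a hypothesis $h_{t+1}:\mathcal{X}\to\mathcal{Y}$; its error function at time $t$ is $\mathcal{E}_t(x)=\ell(x,c(x),h_t(x))$. A set $U\subset\mathcal{X}$ is locally learned for $c$ by $\mathcal{A}$ if for every sequence of instances $(x_t)_t$ (labeled by $c$), either $x_t\in U$ for only finitely many $t$, or $\sup_{x\in U}\mathcal{E}_t(x)\to0$. $\mathcal{A}$ is OLC for $c$ if there is a countable collection of locally learned sets for $c$ whose union covers $\mathcal{X}$ up to a $\nu$-null set. $\nu$ uniformly dominates a family $\mathcal{M}$ if for all $\epsilon>0$ there is $\delta>0$ with $\nu(A)<\delta\Rightarrow\mu(A)<\epsilon$ for all measurable $A$ and $\mu\in\mathcal{M}$; a $\nu$-dominated adversary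 always selects $\mu_t$ from such a family. *)

(* Defs.v *)
From HB Require Import structures.
From mathcomp Require Import all_boot all_order all_algebra.
From mathcomp Require Import all_classical all_reals all_analysis measurable_realfun.
Set Implicit Arguments. Unset Strict Implicit. Unset Printing Implicit Defensive.
Import Order.TTheory GRing.Theory Num.Theory.
Import numFieldNormedType.Exports.
Local Open Scope classical_set_scope.
Local Open Scope ring_scope.

Section SmoothedOnline.
Context {X Y : Type} (R : realType).

Definition lhist (c : X -> Y) (xs : nat -> X) (t : nat) : seq (X * Y) :=
  [seq (xs s, c (xs s)) | s <- iota 0 t].

Definition hyp (A : seq (X * Y) -> X -> Y) (c : X -> Y) (xs : nat -> X) (t : nat)
  : X -> Y := A (lhist c xs t).

Definition err (l : X -> Y -> Y -> R) (A : seq (X * Y) -> X -> Y) (c : X -> Y)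
  (xs : nat -> X) (t : nat) (x : X) : R := l x (c x) (hyp A c xs t x).

Definition locally_learned (l : X -> Y -> Y -> R) (A : seq (X * Y) -> X -> Y)
  (c : X -> Y) (U : set X) : Prop :=
  forall xs : nat -> X,
    finite_set [set t | U (xs t)] \/
    ((fun t => ereal_sup [set (err l A c xs t x)%:E | x in U]) @ \oo --> 0%E).

End SmoothedOnline.

Section OLC.
Context {d : measure_display} {X : measurableType d} {Y : Type} (R : realType).

Definition OLC (nu : {measure set X -> \bar R}) (l : X -> Y -> Y -> R)
  (A : seq (X * Y) -> X -> Y) (c : X -> Y) : Prop :=
  exists U : nat -> set X,
    (forall i, measurable (U i)) /\
    (forall i, locally_learned l A c (U i)) /\
    nu.-negligible (~` \bigcup_i U i).

Definition uniformly_dominates (nu : {measure set X -> \bar R})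
  (M : set (probability X R)) : Prop :=
  forall e : R, 0 < e -> exists2 delta : R, 0 < delta &
    forall B, measurable B -> (nu B < delta%:E)%E ->
      forall mu, M mu -> (mu B < e%:E)%E.

Definition hist_sigma {d' : measure_display} {Omega : measurableType d'}
  (x : nat -> Omega -> X) (t : nat) : set (set Omega) :=
  <<s [set E | exists s B, (s < t)%N /\ measurable B /\ E = x s @^-1` B] >>.

(* The random process x is generated by the (history-dependent) adversary adv:
   conditionally on x_0..x_{t-1}, x_t is distributed as adv [x_0;..;x_{t-1}]. *)
Definition generated_by {d' : measure_display} {Omega : measurableType d'}
  (P : probability Omega R) (adv : seq X -> probability X R)
  (x : nat -> Omega -> X) : Prop :=
  (forall t, measurable_fun setT (x t)) /\
  (forall t B, measurable B ->
     measurable_fun setT (fun w => adv [seq x s w | s <- iota 0 t] B)) /\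
  (forall t E B, hist_sigma x t E -> measurable B ->
     P (E `&` x t @^-1` B) =
     (\int[P]_(w in E) adv [seq x s w | s <- iota 0 t] B)%E).

End OLC.

(* Main.v *)
Require Import Defs.
From HB Require Import structures.
From mathcomp Require Import all_boot all_order all_algebra.
From mathcomp Require Import all_classical all_reals all_analysis measurable_realfun.
From mathcomp Require Import ring lra.
Import Order.TTheory GRing.Theory Num.Theory.
Import numFieldNormedType.Exports.
Local Open Scope classical_set_scope.
Local Open Scope ring_scope.

Section hs.
Context {d : measure_display} {X : measurableType d}.
Context {d' : measure_display} {Omega : measurableType d'}.
Variable x : nat -> Omega -> X.

Lemma hs_mono t t' E : (t <= t')%N -> hist_sigma x t E -> hist_sigma x t' E.
Proof.
move=> tt'; apply: sub_sigma_algebra2 => F [s [B [st [mB ->]]]].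
by exists s, B; split=> //; apply: leq_trans tt'.
Qed.

Lemma hs_gen t s B : (s < t)%N -> measurable B -> hist_sigma x t (x s @^-1` B).
Proof. by move=> st mB; apply: sub_sigma_algebra; exists s, B. Qed.

Lemma hs_T t : hist_sigma x t setT.
Proof.
have -> : (setT : set Omega) = setT `\` set0 by rewrite setD0.
by apply: sigma_algebraCD; exact: sigma_algebra0.
Qed.

Lemma hs_U t E F : hist_sigma x t E -> hist_sigma x t F -> hist_sigma x t (E `|` F).
Proof.
move=> hE hF.
have -> : E `|` F = \bigcup_i (if i == 0%N then E else F).
  rewrite eqEsubset; split=> w.
    by case=> h; [exists 0%N|exists 1%N].
  by case=> -[|i] _ /= h; [left|right].
by apply: sigma_algebra_bigcup => -[|i].
Qed.

Lemma hs_C t E : hist_sigma x t E -> hist_sigma x t (~` E).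
Proof. by move=> h; rewrite -setTD; exact: sigma_algebraCD. Qed.

Lemma hs_I t E F : hist_sigma x t E -> hist_sigma x t F -> hist_sigma x t (E `&` F).
Proof.
move=> hE hF; rewrite -(setCK (E `&` F)) setCI.
by apply: hs_C; apply: hs_U; apply: hs_C.
Qed.

Lemma hs_meas t E : (forall s, measurable_fun setT (x s)) ->
  hist_sigma x t E -> measurable E.
Proof.
move=> mx; apply: smallest_sub; first exact: sigma_algebra_measurable.
move=> F [s [B [_ [mB ->]]]].
by rewrite -[_ @^-1` _]setTI; apply: mx.
Qed.
End hs.
Section ev.
Context (R : realType) {d : measure_display} {X : measurableType d}.
Context {d' : measure_display} {Omega : measurableType d'}.
Variables (P : probability Omega R) (adv : seq X -> probability X R).
Variable x : nat -> Omega -> X.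
Hypothesis x_gen : generated_by P adv x.
Variables (S : set X) (mS : measurable S) (eps : R).
Hypothesis eps_ge0 : 0 <= eps.
Hypothesis hadv : forall s, (adv s S <= eps%:E)%E.

Definition Ev (J : seq nat) : set Omega := [set w | forall s, s \in J -> S (x s w)].

Lemma ev_bound t J : uniq J -> all (fun s => s < t)%N J ->
  hist_sigma x t (Ev J) /\ (P (Ev J) <= (eps ^+ size J)%:E)%E.
Proof.
have [mx [madv hP]] := x_gen.
elim: t J => [|t IH] J uJ aJ.
  case: J uJ aJ => [|//] _ _.
  have -> : Ev [::] = setT by rewrite eqEsubset; split=> // w _ s.
  by split; [exact: hs_T|rewrite probability_setT expr0].
have [tJ|tJ] := boolP (t \in J).
  set J' := rem t J.
  have uJ' : uniq J' by exact: rem_uniq.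
  have memJ' s : (s \in J') = (s != t) && (s \in J) by exact: mem_rem_uniq.
  have aJ' : all (fun s => s < t)%N J'.
    apply/allP => s; rewrite memJ' => /andP[st sJ].
    by move/allP: aJ => /(_ s sJ); rewrite ltnS leq_eqVlt (negbTE st).
  have [hs' hP'] := IH J' uJ' aJ'.
  have EJ : Ev J = Ev J' `&` x t @^-1` S.
    rewrite eqEsubset; split=> w.
      by move=> h; split; [move=> s; rewrite memJ' => /andP[_ /h]|exact: h].
    move=> [h1 h2] s sJ; have [->//|st] := eqVneq s t.
    by apply: h1; rewrite memJ' st.
  have szJ : size J = (size J').+1.
    rewrite size_rem // prednK // lt0n size_eq0; apply/eqP => J0.
    by rewrite J0 in tJ.
  rewrite EJ; split.
    by apply: hs_I; [exact: hs_mono hs'|exact: hs_gen].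
  rewrite hP //; have mE : measurable (Ev J') by exact: hs_meas hs'.
  apply: (@le_trans _ _ (\int[P]_(w in Ev J') (cst eps%:E) w)%E).
    by apply: ge0_le_integral => //;
      first [exact: measurable_funS (madv t S mS) | move=> *; exact: hadv].
  rewrite integral_cst // szJ exprS EFinM.
  by apply: lee_wpmul2l => //; rewrite lee_fin.
have aJt : all (fun s => s < t)%N J.
  apply/allP => s sJ; move/allP: aJ => /(_ s sJ); rewrite ltnS leq_eqVlt.
  by case/orP => // /eqP st; move: tJ; rewrite -st sJ.
have [hs' hP'] := IH J uJ aJt.
by split=> //; exact: hs_mono hs'.
Qed.

Definition Nc (n : nat) (w : Omega) := #|[set s : 'I_n | `[< S (x s w) >]]%SET|.

Lemma bad_bound (q T : nat) : eps <= (8^-1)^+q.+1 ->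
  exists B : set Omega, [/\ measurable B,
    [set w | (T.+1 <= q.+1 * Nc T.+1 w)%N] `<=` B &
    (P B <= ((2^-1)^+T.+1)%:E)%E].
Proof.
move=> epsq.
have [mx [madv hP]] := x_gen.
set n := T.+1.
set L := enum (powerset [set: 'I_n]%SET).
pose Fk k := if (k < size L)%N && (n <= q.+1 * #|nth finset.set0 L k|)%N
  then Ev (map val (enum (nth finset.set0 L k))) else set0.
have evJ (J : {set 'I_n}) : hist_sigma x n (Ev (map val (enum J))) /\
    (P (Ev (map val (enum J))) <= (eps ^+ #|J|)%:E)%E.
  have := @ev_bound n (map val (enum J)).
  rewrite size_map -cardE; apply.
    by rewrite map_inj_uniq ?enum_uniq //; exact: val_inj.
  by apply/allP => s /mapP[s' _ ->]; exact: ltn_ord.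
have mF k : measurable (Fk k).
  rewrite /Fk; case: ifP => _ //.
  exact: hs_meas mx (evJ _).1.
exists (\big[setU/set0]_(k < size L) Fk k); split.
- by apply: bigsetU_measurable => k _; exact: mF.
  move=> w /= hw.
  pose Jw := [set s : 'I_n | `[< S (x s w) >]]%SET.
  have JL : Jw \in L by rewrite mem_enum powersetE finset.subsetT.
  rewrite -bigcup_mkord; exists (index Jw L); first by rewrite /= index_mem.
  rewrite /Fk index_mem JL nth_index //= ifT //.
  move=> s /mapP[s' s'J ->]; move: s'J; rewrite mem_enum inE.
  by move/asboolP.
apply: (le_trans (@content_subadditive _ _ _ P _ Fk (size L) (fun k _ => mF k) _ (@subset_refl _ _))).
  by apply: bigsetU_measurable => k _; exact: mF.
apply: (@le_trans _ _ (\sum_(k < size L) ((8^-1)^+n)%:E)%E).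
  apply: lee_sum => k _; rewrite /Fk.
  case: ifP => [/andP[_ hk]|_]; last by rewrite measure0 lee_fin exprn_ge0.
  apply: (le_trans (evJ _).2); rewrite lee_fin.
  apply: (@le_trans _ _ (((8^-1)^+q.+1)^+#|nth finset.set0 L k|)).
    by apply: lerXn2r => //; rewrite nnegrE.
  rewrite -exprM; apply: ler_wiXn2l => //; lra.
rewrite sumEFin lee_fin sumr_const card_ord.
have -> : size L = (2 ^ n)%N by rewrite -cardE card_powerset cardsT card_ord.
rewrite -[_ *+ (2 ^ n)]mulr_natr natrX -exprMn; apply: lerXn2r; rewrite ?nnegrE; lra.
Qed.

Lemma bc (q : nat) : eps <= (8^-1)^+q.+1 ->
  exists Z : set Omega, [/\ measurable Z, P Z = 0%E &
    forall w, ~ Z w -> exists n, forall T, (n <= T)%N ->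
      (q.+1 * Nc T.+1 w < T.+1)%N].
Proof.
move=> hq.
have /choice[Bf hB] := fun T => bad_bound q T hq.
have mB k : measurable (Bf k) by case: (hB k).
exists (lim_sup_set Bf); split.
- by apply: bigcap_measurable; first [exists 0%N | move=> k _; apply: bigcup_measurable => j _].
- apply: lim_sup_set_cvg0 => //.
  apply: (@le_lt_trans _ _ (\sum_(0 <= i <oo) ((2^-1)^+i.+1)%:E)%E).
    by apply: lee_nneseries => // i _; case: (hB i).
  have h := @cvg_geometric_eseries_half R 1 0.
  rewrite expr0 divr1 in h.
  have -> : (\sum_(0 <= i <oo) ((2^-1)^+i.+1)%:E)%E = (1%:E : \bar R).
    rewrite -(cvg_lim _ h) //; congr (limn _); apply/funext => n.
    rewrite /eseries /=; apply: eq_bigr => k _; congr EFin.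
    by rewrite addn1 natrX div1r exprVn.
  exact: ltry.
- move=> w hw.
  have [n hn] : exists n, ~ (\bigcup_(j in [set j | (n <= j)%N]) Bf j) w.
    apply/existsNP => h; apply: hw => n _; exact: h.
  exists n => T nT; rewrite ltnNge; apply/negP => h; apply: hn.
  by exists T => //; case: (hB T) => _ sub _; exact: sub.
Qed.
End ev.
Lemma pick_K (R : realType) d (X : measurableType d)
  (nu : {finite_measure set X -> \bar R}) (U : nat -> set X)
  (mU : forall i, measurable (U i))
  (negU : nu.-negligible (~` \bigcup_i U i))
  (M : set (probability X R)) (dom : uniformly_dominates nu M)
  (e : R) (e0 : 0 < e) :
  exists K, forall mu, M mu -> (mu (~` \bigcup_(i in `I_K) U i) <= e%:E)%E.
Proof.
have [del del0 hdel] := dom (e / 2) (divr_gt0 e0 (ltr0Sn _ 1)).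
have [N0 [mN0 N00 sN0]] := negU.
pose D K := (~` \bigcup_(i in `I_K) U i) `&` ~` N0.
have mS K : measurable (~` \bigcup_(i in `I_K) U i).
  by apply: measurableC; apply: bigcup_measurable => i _.
have mD K : measurable (D K) by apply: measurableI => //; exact: measurableC.
have hcvg : nu \o D @ \oo --> nu (\bigcap_K D K).
  apply: nonincreasing_cvg_mu => //.
  - by rewrite ltey_eq (fin_num_measure _ _ (mD 0%N)).
  - by apply: bigcap_measurable; first [exists 0%N | move=> k _].
  - move=> m n mn; apply/subsetPset => w [h1 h2]; split=> // -[i /= im Ui].
    by apply: h1; exists i => //=; exact: leq_trans im mn.
have D0 : \bigcap_K D K = set0.
  rewrite -subset0 => w hw.
  have [/sN0 N0w|h] := pselect ((~` \bigcup_i U i) w).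
    by have [_ ] := hw 0%N I.
  have [i _ Ui] : (\bigcup_i U i) w by apply: contrapT.
  have [h1 _] := hw i.+1 I; apply: h1; exists i => //=.
rewrite D0 measure0 in hcvg.
have hQ : nbhs (0%E : \bar R) [set y : \bar R | (y < del%:E)%E].
  apply/nbhs_EFin.
  exists del => // r /= h; rewrite lte_fin.
  by move: h; rewrite /ball /= sub0r normrN => /ltr_normlW.
have [K _ hK] := hcvg _ hQ.
have {}hK := hK K (leqnn K).
exists K => mu Mmu.
rewrite (splitr e) EFinD.
apply: ltW.
apply: (@le_lt_trans _ _ (mu (D K `|` N0))).
  apply: le_measure; rewrite ?inE //; first exact: measurableU (mD K) mN0.
  by move=> w Sw; have [N0w|nN0w] := pselect (N0 w); [right|left].
apply: (le_lt_trans (measureU2 _ (mD K) mN0)).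
apply: lteD; apply: hdel => //.
by move: N00; rewrite /= => ->; rewrite lte_fin.
Qed.
Lemma fin_bound (A : set nat) : finite_set A -> exists n, forall t, A t -> (t < n)%N.
Proof.
move=> /finite_fsetP[F ->]; exists (\max_(i <- finmap.enum_fset F) i).+1 => t /= tF.
by rewrite ltnS; exact: (@leq_bigmax_seq _ _ xpredT id t tF isT).
Qed.

Lemma combine (Q : nat -> nat -> Prop) :
  (forall i, exists n, forall t, (n <= t)%N -> Q i t) ->
  forall K, exists n, forall i t, (i < K)%N -> (n <= t)%N -> Q i t.
Proof.
move=> h; elim=> [|K [n hn]]; first by exists 0%N.
have [m hm] := h K; exists (maxn n m) => i t.
rewrite ltnS leq_eqVlt => /orP[/eqP->|iK] tnm.
  by apply: hm; exact: leq_trans (leq_maxr n m) tnm.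
by apply: hn => //; exact: leq_trans (leq_maxl n m) tnm.
Qed.

Lemma ev_sup (R : realType) (u : nat -> \bar R) (e : R) : 0 < e ->
  u @ \oo --> 0%E -> exists N, forall t, (N <= t)%N -> (u t <= e%:E)%E.
Proof.
move=> e0 hu.
have hQ : nbhs (0%E : \bar R) [set y : \bar R | (y <= e%:E)%E].
  apply/nbhs_EFin; exists e => // r /= h; rewrite lee_fin.
  by move: h; rewrite /ball /= sub0r normrN => /ltr_normlW/ltW.
have [N _ hN] := hu _ hQ; exists N => t Nt; exact: hN.
Qed.

Lemma det (R : realType) {X Y : Type} (l : X -> Y -> Y -> R)
  (A : seq (X * Y) -> X -> Y) (c : X -> Y) (U : nat -> set X)
  (hU : forall i, locally_learned l A c (U i)) (M : R)
  (l_ge0 : forall x y y', 0 <= l x y y') (hM : forall x y y', l x y y' <= M)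
  (xs : nat -> X) (K : nat -> nat)
  (hK : forall q, exists n, forall T, (n <= T)%N ->
     (q.+1 * #|[set s : 'I_T.+1 |
        `[< (~` \bigcup_(i in `I_(K q)) U i) (xs s) >]]%SET| < T.+1)%N) :
  (fun T : nat => T%:R^-1 * \sum_(t < T) err l A c xs t (xs t)) @ \oo --> 0.
Proof.
have M0 : 0 <= M := le_trans (l_ge0 (xs 0%N) (c (xs 0%N)) (c (xs 0%N))) (hM _ _ _).
apply/cvgrPdist_le => eta eta0.
set e3 := eta / 3.
have e30 : 0 < e3 by rewrite divr_gt0.
set q := Num.Def.archi_bound (M / e3).
have hq : M <= q.+1%:R * e3.
  have := @archi_boundP R (M / e3) (divr_ge0 M0 (ltW e30)).
  rewrite -/q ltr_pdivrMr // => /ltW h; apply: (le_trans h).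
  by rewrite ler_wpM2r ?(ltW e30) // ler_nat.
set S := ~` \bigcup_(i in `I_(K q)) U i.
have [t0 ht0] : exists t0, forall i t, (i < K q)%N -> (t0 <= t)%N ->
    U i (xs t) -> err l A c xs t (xs t) <= e3.
  apply: (@combine (fun i t => U i (xs t) -> err l A c xs t (xs t) <= e3)).
  move=> i; case: (hU i xs) => [/fin_bound [n hn]|hcv].
    by exists n => t nt /hn; rewrite ltnNge nt.
  have [N hN] := @ev_sup R _ e3 e30 hcv.
  exists N => t Nt Ut; rewrite -lee_fin; apply: le_trans (hN t Nt).
  by apply: ereal_sup_ubound; exists (xs t).
have [n hn] := hK q.
set B := Num.Def.archi_bound (t0%:R * M / e3).
have hB : t0%:R * M <= B%:R * e3.
  have := @archi_boundP R (t0%:R * M / e3) (divr_ge0 (mulr_ge0 (ler0n _ _) M0) (ltW e30)).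
  by rewrite -/B ltr_pdivrMr // => /ltW.
exists (maxn n.+1 (maxn t0 B)) => // T /= hT.
move: hT; rewrite !geq_max => /and3P[nT t0T BT].
case: T nT t0T BT => [//|T] nT t0T BT.
have sum0 : 0 <= \sum_(t < T.+1) err l A c xs t (xs t).
  by apply: sumr_ge0 => t _; exact: l_ge0.
rewrite sub0r normrN ger0_norm; last by rewrite mulr_ge0 // invr_ge0.
rewrite ler_pdivrMl ?ltr0Sn //.
set N := #|[set s : 'I_T.+1 | `[< S (xs s) >]]%SET|.
have hN : (q.+1 * N < T.+1)%N by apply: hn; rewrite -ltnS.
have pw (t : 'I_T.+1) : err l A c xs t (xs t) <=
    ((if (t < t0)%N then M else 0) + e3) + (if `[< S (xs t) >] then M else 0).
  have X0 : 0 <= (if `[< S (xs t) >] then M else 0) by case: ifP.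
  case: ifP => [_|/negbT]. 
    have := hM (xs t) (c (xs t)) (hyp A c xs t (xs t)).
    rewrite /err; lra.
  rewrite -leqNgt => tt0; rewrite add0r.
  case: ifP => [_|/asboolPn h]; first by rewrite ler_wpDl ?(ltW e30) // hM.
  have [i /= iK Ui] : (\bigcup_(i in `I_(K q)) U i) (xs t) by apply: contrapT.
  by rewrite addr0; exact: ht0 iK tt0 Ui.
apply: (le_trans (ler_sum _ (fun t _ => pw t))).
rewrite !big_split /=.
have s1 : \sum_(t < T.+1) (if (t < t0)%N then M else 0) <= t0%:R * M.
  rewrite -(big_mkord xpredT (fun t => if (t < t0)%N then M else 0)).
  rewrite (@big_cat_nat _ _ _ t0 0 T.+1 _ _ (leq0n t0) t0T) /=.
  rewrite (eq_big_nat _ _ (F2 := fun _ => M)); last first.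
    by move=> i /andP[_ ->].
  rewrite [X in _ + X](eq_big_nat _ _ (F2 := fun _ => 0)); last first.
    by move=> i /andP[h _]; rewrite ltnNge h.
  by rewrite sumr_const_nat big1 // addr0 subn0 mulr_natl.
have s2 : \sum_(t < T.+1) e3 = T.+1%:R * e3.
  by rewrite sumr_const card_ord mulr_natl.
have s3 : \sum_(t < T.+1) (if `[< S (xs t) >] then M else 0) = N%:R * M.
  rewrite -big_mkcond /= sumr_const mulr_natl; congr (_ *+ _).
  by apply: eq_card => t; rewrite !inE.
rewrite s2 s3.
have hN' : q.+1%:R * N%:R <= T.+1%:R :> R.
  by rewrite -natrM ler_nat; exact: ltnW.
have hB' : B%:R <= T.+1%:R :> R by rewrite ler_nat.
have N0 : 0 <= N%:R :> R by [].
have e3E : eta = 3 * e3 by rewrite /e3; field.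
rewrite e3E.
have := ler_wpM2r N0 hq.
have := ler_wpM2r (ltW e30) hB'.
have := ler_wpM2r (ltW e30) hN'.
nra.
Qed.

Theorem theorem3 (R : realType) (d : measure_display) (X : measurableType d)
  (Y : Type) (nu : {finite_measure set X -> \bar R})
  (l : X -> Y -> Y -> R)
  (l_ge0 : forall x y y', 0 <= l x y y')
  (l_bounded : exists M : R, forall x y y', l x y y' <= M)
  (l_diag : forall x y, l x y y = 0)
  (c : X -> Y) (A : seq (X * Y) -> X -> Y)
  (A_OLC : OLC nu l A c)
  (adv : seq X -> probability X R)
  (adv_dom : uniformly_dominates nu (range adv))
  (d' : measure_display) (Omega : measurableType d') (P : probability Omega R)
  (x : nat -> Omega -> X)
  (x_gen : generated_by P adv x) :
  {ae P, forall w,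
    (fun T : nat => (T%:R)^-1 *
       \sum_(t < T) l (x t w) (c (x t w)) (hyp A c (fun s => x s w) t (x t w)))
      @ \oo --> 0}.
Proof.
have [M hM] := l_bounded.
have [U [mU [hU negU]]] := A_OLC.
pose e (q : nat) : R := (8^-1)^+q.+1.
have e0 q : 0 < e q by rewrite exprn_gt0 // invr_gt0.
have /choice[Kf hKf] := fun q => @pick_K R d X nu U mU negU (range adv) adv_dom (e q) (e0 q).
pose S q := ~` \bigcup_(i in `I_(Kf q)) U i.
have mS q : measurable (S q) by apply: measurableC; apply: bigcup_measurable => i _.
have hadv q s : (adv s (S q) <= (e q)%:E)%E by apply: hKf; exists s.
have hZ q := @bc R d X d' Omega P adv x x_gen (S q) (mS q) (e q) (ltW (e0 q)) (hadv q) q (lexx _).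
have /choice[Zf hZf] := hZ.
apply: (@negligibleS _ _ _ P (\bigcup_q Zf q)).
  move=> w /= nw; apply: contrapT => nZ; apply: nw.
  apply: (@det R X Y l A c U hU M l_ge0 hM (fun s => x s w) Kf).
  move=> q; have [_ _ h] := hZf q; apply: h => Zw; apply: nZ; by exists q.
by apply: negligible_bigcup => q; have [mZ PZ _] := hZf q; exists (Zf q); split.
Qed.
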